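(* For every constant $K>1$ there is a $K$-Lipschitz homeomorphism of a filled ideal hyperbolic triangle to itself which maps each side to itself and multiplies arc length along each side by exactly $K$. *)

(* Defs.v *)
From Stdlib Require Import Reals.
Open Scope R_scope.

Definition pt : Type := (R * R)%type.

Definition arcosh (t : R) : R := ln (t + sqrt (t * t - 1)).

(* hyperbolic distance in the upper half-plane {(x,y) | y > 0} *)
Definition hdist (p q : pt) : R :=
  arcosh (1 + ((fst p - fst q) ^ 2 + (snd p - snd q) ^ 2) / (2 * snd p * snd q)).

(* The filled ideal triangle with ideal vertices -1, 1, infinity *)
Definition ideal_triangle (p : pt) : Prop :=
  0 < snd p /\ -1 <= fst p <= 1 /\ 1 <= fst p ^ 2 + snd p ^ 2.

Definition side_left (p : pt) : Prop := 0 < snd p /\ fst p = -1.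
Definition side_right (p : pt) : Prop := 0 < snd p /\ fst p = 1.
Definition side_bottom (p : pt) : Prop := 0 < snd p /\ fst p ^ 2 + snd p ^ 2 = 1.

(* f maps the side S onto itself and multiplies arc length along S by exactly K
   (on a geodesic, arc length between two points equals hyperbolic distance) *)
Definition maps_side_stretching (f : pt -> pt) (S : pt -> Prop) (K : R) : Prop :=
  (forall p, S p -> S (f p)) /\
  (forall q, S q -> exists p, S p /\ f p = q) /\
  (forall p q, S p -> S q -> hdist (f p) (f q) = K * hdist p q).

Definition hcontinuous_on (A : pt -> Prop) (g : pt -> pt) : Prop :=
  forall p, A p -> forall eps, 0 < eps -> exists delta, 0 < delta /\
    forall q, A q -> hdist p q < delta -> hdist (g p) (g q) < eps.

(* Main.v *)
Require Import Defs.
From Stdlib Require Import Reals Lra Psatz.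
Open Scope R_scope.

Lemma ln_le' x y : 0 < x -> x <= y -> ln x <= ln y.
Proof. intros Hx [H|H]. left; apply ln_increasing; lra. subst; lra. Qed.

Lemma ln_ge0 x : 1 <= x -> 0 <= ln x.
Proof. intros; rewrite <- ln_1; apply ln_le'; lra. Qed.

Lemma exp_le' a b : a <= b -> exp a <= exp b.
Proof. intros [H|H]. left; apply exp_increasing; auto. subst; lra. Qed.

Lemma exp_ge1 a : 0 <= a -> 1 <= exp a.
Proof. intros; rewrite <- exp_0; apply exp_le'; auto. Qed.

Lemma cosh_e x : cosh x = (exp x + / exp x) / 2.
Proof. unfold cosh; rewrite exp_Ropp; auto. Qed.

Lemma sinh_e x : sinh x = (exp x - / exp x) / 2.
Proof. unfold sinh; rewrite exp_Ropp; auto. Qed.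

Lemma cosh_even x : cosh (- x) = cosh x.
Proof. unfold cosh; rewrite Ropp_involutive; lra. Qed.

Lemma cosh_abs x : cosh (Rabs x) = cosh x.
Proof. unfold Rabs; destruct (Rcase_abs x); auto using cosh_even. Qed.

Lemma cosh_strict a b : 0 <= a -> a < b -> cosh a < cosh b.
Proof.
  intros Ha Hab. rewrite !cosh_e.
  assert (H1 : 1 <= exp a) by (apply exp_ge1; auto).
  assert (H2 : exp a < exp b) by (apply exp_increasing; auto).
  assert (Hp : 0 < exp a) by apply exp_pos.
  assert (Hq : 0 < exp b) by apply exp_pos.
  set (A := exp a) in *. set (B := exp b) in *.
  assert (/ A - / B = (B - A) / (A * B)) by (field; lra).
  assert (HAB : 1 < A * B) by nra.
  assert (/ (A * B) < 1) by (rewrite <- Rinv_1; apply Rinv_lt_contravar; nra).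
  assert ((B - A) / (A * B) < B - A) by (unfold Rdiv; nra).
  lra.
Qed.

Lemma cosh_mono a b : 0 <= a -> a <= b -> cosh a <= cosh b.
Proof. intros Ha [H|H]. left; apply cosh_strict; auto. subst; lra. Qed.

Lemma cosh_ge1 x : 1 <= cosh x.
Proof. rewrite <- cosh_abs, <- cosh_0. apply cosh_mono; [lra| apply Rabs_pos]. Qed.

Lemma cosh_gt1 x : 0 < x -> 1 < cosh x.
Proof. intros; rewrite <- cosh_0; apply cosh_strict; lra. Qed.

Lemma sinh_nonneg x : 0 <= x -> 0 <= sinh x.
Proof. intros [H|H]. left; rewrite <- sinh_0; apply sinh_lt; auto. subst; rewrite sinh_0; lra. Qed.

Lemma sinh_mono a b : a <= b -> sinh a <= sinh b.
Proof. intros [H|H]. left; apply sinh_lt; auto. subst; lra. Qed.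

Lemma exp_minus a b : exp (a - b) = exp a / exp b.
Proof. unfold Rminus, Rdiv; rewrite exp_plus, exp_Ropp; auto. Qed.

Lemma cosh_diff A B : cosh A - cosh B = 2 * sinh ((A + B) / 2) * sinh ((A - B) / 2).
Proof.
  set (a := (A + B) / 2). set (b := (A - B) / 2).
  replace A with (a + b) by (unfold a, b; field).
  replace B with (a - b) by (unfold a, b; field).
  rewrite !cosh_e, !sinh_e, exp_plus, exp_minus.
  assert (0 < exp a) by apply exp_pos.
  assert (0 < exp b) by apply exp_pos.
  field; lra.
Qed.

Lemma lemP A B A' B' : 0 <= B <= A -> 0 <= B' <= A' -> A - B <= A' - B' -> A + B <= A' + B' ->
  cosh A - cosh B <= cosh A' - cosh B'.
Proof.
  intros. rewrite !cosh_diff.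
  assert (0 <= sinh ((A+B)/2)) by (apply sinh_nonneg; lra).
  assert (0 <= sinh ((A-B)/2)) by (apply sinh_nonneg; lra).
  assert (sinh ((A+B)/2) <= sinh ((A'+B')/2)) by (apply sinh_mono; lra).
  assert (sinh ((A-B)/2) <= sinh ((A'-B')/2)) by (apply sinh_mono; lra).
  nra.
Qed.

Lemma arcosh_cosh x : 0 <= x -> arcosh (cosh x) = x.
Proof.
  intros Hx. unfold arcosh.
  assert (cosh x * cosh x - 1 = sinh x * sinh x).
  { rewrite cosh_e, sinh_e. assert (0 < exp x) by apply exp_pos. field; lra. }
  rewrite H, sqrt_square by (apply sinh_nonneg; auto).
  replace (cosh x + sinh x) with (exp x) by (unfold cosh, sinh; field).
  apply ln_exp.
Qed.

Lemma arcosh_pos_arg a : 1 <= a -> 0 < a + sqrt (a * a - 1).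
Proof. intros; pose proof (sqrt_pos (a*a-1)); lra. Qed.

Lemma arcosh_strict a b : 1 <= a -> a < b -> arcosh a < arcosh b.
Proof.
  intros. unfold arcosh. apply ln_increasing. apply arcosh_pos_arg; auto.
  assert (sqrt (a*a-1) <= sqrt (b*b-1)) by (apply sqrt_le_1_alt; nra). lra.
Qed.

Lemma arcosh_mono a b : 1 <= a -> a <= b -> arcosh a <= arcosh b.
Proof. intros Ha [H|H]. left; apply arcosh_strict; auto. subst; lra. Qed.

Lemma arcosh_1 : arcosh 1 = 0.
Proof. rewrite <- cosh_0. apply arcosh_cosh; lra. Qed.

Lemma arcosh_nonneg a : 1 <= a -> 0 <= arcosh a.
Proof. intros; rewrite <- arcosh_1; apply arcosh_mono; lra. Qed.

Lemma cosh_arcosh a : 1 <= a -> cosh (arcosh a) = a.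
Proof.
  intros Ha. rewrite cosh_e. unfold arcosh. rewrite exp_ln by (apply arcosh_pos_arg; auto).
  pose proof (sqrt_sqrt (a*a-1)). assert (0 <= a*a-1) by nra. specialize (H H0).
  pose proof (arcosh_pos_arg a Ha).
  field_simplify; [| lra]. 
  replace (sqrt (a * a - 1) ^ 2) with (a*a-1) by (simpl; lra). field; lra.
Qed.

Lemma arcosh_le_of a L : 1 <= a -> 0 <= L -> a <= cosh L -> arcosh a <= L.
Proof. intros. rewrite <- (arcosh_cosh L) by auto. apply arcosh_mono; auto. Qed.

Lemma arcosh_lt_of a L : 1 <= a -> 0 <= L -> a < cosh L -> arcosh a < L.
Proof. intros. rewrite <- (arcosh_cosh L) by auto. apply arcosh_strict; auto. Qed.

Lemma le_arcosh_of a L : 1 <= a -> 0 <= L -> cosh L <= a -> L <= arcosh a.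
Proof. intros. rewrite <- (arcosh_cosh L) by auto. apply arcosh_mono; auto using cosh_ge1. Qed.

Definition ch (p q : pt) : R :=
  1 + ((fst p - fst q) ^ 2 + (snd p - snd q) ^ 2) / (2 * snd p * snd q).

Lemma hdist_ch p q : hdist p q = arcosh (ch p q).
Proof. reflexivity. Qed.

Lemma ch_ge1 p q : 0 < snd p -> 0 < snd q -> 1 <= ch p q.
Proof.
  intros. unfold ch. assert (0 <= ((fst p - fst q) ^ 2 + (snd p - snd q) ^ 2) / (2 * snd p * snd q)).
  { pose proof (pow2_ge_0 (fst p - fst q)); pose proof (pow2_ge_0 (snd p - snd q)).
    apply Rmult_le_pos. lra. left; apply Rinv_0_lt_compat; nra. } lra.
Qed.

Lemma ch_sym p q : ch p q = ch q p.
Proof. unfold ch. replace (2 * snd q * snd p) with (2 * snd p * snd q) by ring.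
  replace ((fst q - fst p) ^ 2 + (snd q - snd p) ^ 2) with ((fst p - fst q) ^ 2 + (snd p - snd q) ^ 2) by ring.
  reflexivity. Qed.

Lemma hdist_sym p q : hdist p q = hdist q p.
Proof. rewrite !hdist_ch, ch_sym; auto. Qed.

Lemma hdist_nonneg p q : 0 < snd p -> 0 < snd q -> 0 <= hdist p q.
Proof. intros; rewrite hdist_ch; apply arcosh_nonneg, ch_ge1; auto. Qed.

Lemma cosh_hdist p q : 0 < snd p -> 0 < snd q -> cosh (hdist p q) = ch p q.
Proof. intros; rewrite hdist_ch; apply cosh_arcosh, ch_ge1; auto. Qed.

Lemma hdist_refl p : hdist p p = 0.
Proof. rewrite hdist_ch. unfold ch. replace (((fst p - fst p) ^ 2 + (snd p - snd p) ^ 2) / (2 * snd p * snd p)) with 0.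
  rewrite Rplus_0_r; apply arcosh_1. unfold Rdiv; ring. Qed.

Lemma hdist_le p q L : 0 < snd p -> 0 < snd q -> 0 <= L -> ch p q <= cosh L -> hdist p q <= L.
Proof. intros; rewrite hdist_ch; apply arcosh_le_of; auto using ch_ge1. Qed.

Lemma hdist_lt p q L : 0 < snd p -> 0 < snd q -> 0 <= L -> ch p q < cosh L -> hdist p q < L.
Proof. intros; rewrite hdist_ch; apply arcosh_lt_of; auto using ch_ge1. Qed.

Lemma hdist_ge p q L : 0 < snd p -> 0 < snd q -> 0 <= L -> cosh L <= ch p q -> L <= hdist p q.
Proof. intros; rewrite hdist_ch; apply le_arcosh_of; auto using ch_ge1. Qed.

Definition sc (p : pt) : R := ln (snd p / 2).

Lemma exp_sc p : 0 < snd p -> exp (sc p) = snd p / 2.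
Proof. intros; unfold sc; apply exp_ln; lra. Qed.

Lemma ch_log p q : 0 < snd p -> 0 < snd q ->
  ch p q = cosh (sc p - sc q) + (fst p - fst q) ^ 2 / (8 * exp (sc p) * exp (sc q)).
Proof.
  intros. rewrite cosh_e, exp_minus, !exp_sc by auto. unfold ch. field. lra.
Qed.

Lemma ch_ge_cosh p q : 0 < snd p -> 0 < snd q -> cosh (sc p - sc q) <= ch p q.
Proof.
  intros. rewrite ch_log by auto.
  assert (0 <= (fst p - fst q) ^ 2 / (8 * exp (sc p) * exp (sc q))).
  { pose proof (exp_pos (sc p)); pose proof (exp_pos (sc q)).
    apply Rmult_le_pos. apply pow2_ge_0. left; apply Rinv_0_lt_compat; nra. } lra.
Qed.

Lemma busemann p q : 0 < snd p -> 0 < snd q -> Rabs (sc p - sc q) <= hdist p q.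
Proof.
  intros. apply hdist_ge; auto. apply Rabs_pos. rewrite cosh_abs. apply ch_ge_cosh; auto.
Qed.

Lemma sum_sq_pos a b : 0 < b -> 0 < a ^ 2 + b ^ 2.
Proof. intros; pose proof (pow2_ge_0 a); assert (0 < b ^ 2) by (apply pow_lt; auto); lra. Qed.

Definition iota1 (p : pt) : pt :=
  let u := fst p - 1 in let D := u ^ 2 + snd p ^ 2 in (1 + 4 * u / D, 4 * snd p / D).
Definition iotam (p : pt) : pt :=
  let u := fst p + 1 in let D := u ^ 2 + snd p ^ 2 in (-1 + 4 * u / D, 4 * snd p / D).

Lemma iota1_pos p : 0 < snd p -> 0 < snd (iota1 p).
Proof. intros. simpl. assert (0 < (fst p - 1) ^ 2 + snd p ^ 2) by (apply sum_sq_pos; auto).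
  apply Rmult_lt_0_compat. lra. apply Rinv_0_lt_compat; auto. Qed.

Lemma iotam_pos p : 0 < snd p -> 0 < snd (iotam p).
Proof. intros. simpl. assert (0 < (fst p + 1) ^ 2 + snd p ^ 2) by (apply sum_sq_pos; auto).
  apply Rmult_lt_0_compat. lra. apply Rinv_0_lt_compat; auto. Qed.

Lemma iota1_inv p : 0 < snd p -> iota1 (iota1 p) = p.
Proof.
  intros. destruct p as [x y]. simpl in *. unfold iota1; simpl.
  assert (0 < (x - 1) ^ 2 + y ^ 2) by (apply sum_sq_pos; auto).
  f_equal; field; split; try lra; nra.
Qed.

Lemma iotam_inv p : 0 < snd p -> iotam (iotam p) = p.
Proof.
  intros. destruct p as [x y]. simpl in *. unfold iotam; simpl.
  assert (0 < (x + 1) ^ 2 + y ^ 2) by (apply sum_sq_pos; auto).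
  f_equal; field; split; try lra; nra.
Qed.

Lemma iota1_iso p q : 0 < snd p -> 0 < snd q -> ch (iota1 p) (iota1 q) = ch p q.
Proof.
  intros. destruct p as [x y], q as [x' y']. simpl in *. unfold ch, iota1; simpl.
  assert (0 < (x - 1) ^ 2 + y ^ 2) by (apply sum_sq_pos; auto).
  assert (0 < (x' - 1) ^ 2 + y' ^ 2) by (apply sum_sq_pos; auto).
  f_equal. field. repeat split; lra.
Qed.

Lemma iotam_iso p q : 0 < snd p -> 0 < snd q -> ch (iotam p) (iotam q) = ch p q.
Proof.
  intros. destruct p as [x y], q as [x' y']. simpl in *. unfold ch, iotam; simpl.
  assert (0 < (x + 1) ^ 2 + y ^ 2) by (apply sum_sq_pos; auto).
  assert (0 < (x' + 1) ^ 2 + y' ^ 2) by (apply sum_sq_pos; auto).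
  f_equal. field. repeat split; lra.
Qed.

Definition kf (K s : R) : R := if Rle_dec s 0 then s else K * s.
Definition G (K : R) (p : pt) : pt := (fst p, 2 * exp (kf K (sc p))).

Lemma G_pos K p : 0 < snd (G K p).
Proof. simpl; pose proof (exp_pos (kf K (sc p))); lra. Qed.

Lemma sc_G K p : sc (G K p) = kf K (sc p).
Proof. unfold sc at 1; simpl. replace (2 * exp (kf K (sc p)) / 2) with (exp (kf K (sc p))) by field.
  apply ln_exp. Qed.

Lemma G_id K p : 0 < snd p -> sc p <= 0 -> G K p = p.
Proof. intros. destruct p as [x y]. unfold G, kf. destruct (Rle_dec (sc (x, y)) 0); [|lra].
  rewrite exp_sc by auto. simpl. f_equal; field. Qed.

Lemma kf_pos K s : 0 < K -> (0 < kf K s <-> 0 < s).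
Proof. intros; unfold kf; destruct (Rle_dec s 0); split; intros; try lra; nra. Qed.

Lemma kf_nonpos K s : 0 < K -> (kf K s <= 0 <-> s <= 0).
Proof. intros; unfold kf; destruct (Rle_dec s 0); split; intros; try lra; nra. Qed.

Lemma kf_nn K s : 0 <= s -> kf K s = K * s.
Proof. intros; unfold kf; destruct (Rle_dec s 0); [ assert (s = 0) by lra; subst; ring | auto]. Qed.

Lemma kf_inv K s : 0 < K -> kf (/ K) (kf K s) = s.
Proof. intros. unfold kf. destruct (Rle_dec s 0).
  destruct (Rle_dec s 0); [auto|lra].
  destruct (Rle_dec (K * s) 0). nra. field; lra. Qed.

Lemma G_inv K p : 0 < K -> 0 < snd p -> G (/ K) (G K p) = p.
Proof. intros. destruct p as [x y]. unfold G at 1. rewrite sc_G, kf_inv by auto.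
  unfold G; simpl. rewrite exp_sc by auto. simpl. f_equal; field. Qed.

Lemma ch_log2 p q : 0 < snd p -> 0 < snd q ->
  ch p q = cosh (sc p - sc q) + (fst p - fst q) ^ 2 * exp (- (sc p + sc q)) / 8.
Proof. intros. rewrite ch_log by auto. rewrite exp_Ropp, exp_plus.
  pose proof (exp_pos (sc p)); pose proof (exp_pos (sc q)). field; lra. Qed.

Lemma w_mono a dx b c : b <= c -> a = dx ^ 2 -> a * exp (- c) / 8 <= a * exp (- b) / 8.
Proof. intros. subst. pose proof (pow2_ge_0 dx). assert (exp (-c) <= exp (-b)) by (apply exp_le'; lra).
  nra. Qed.

Lemma ch_G K p q : 0 < snd p -> 0 < snd q ->
  ch (G K p) (G K q) = cosh (kf K (sc p) - kf K (sc q)) + (fst p - fst q) ^ 2 * exp (- (kf K (sc p) + kf K (sc q))) / 8.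
Proof. intros. rewrite ch_log2 by apply G_pos. rewrite !sc_G. reflexivity. Qed.

Lemma G_lip K p q : 1 <= K -> 0 < snd p -> 0 < snd q -> hdist (G K p) (G K q) <= K * hdist p q.
Proof.
  intros HK Hp Hq.
  set (s := sc p). set (t := sc q). set (d := hdist p q).
  assert (Hd : Rabs (s - t) <= d) by (apply busemann; auto).
  assert (Hd0 : 0 <= d) by (apply hdist_nonneg; auto).
  assert (Hcd : cosh d = ch p q) by (apply cosh_hdist; auto).
  rewrite ch_log2 in Hcd by auto. fold s t in Hcd.
  apply hdist_le; try apply G_pos. nra.
  rewrite ch_G by auto. fold s t.
  assert (Hk1 : Rabs (kf K s - kf K t) <= K * Rabs (s - t)).
  { unfold kf; destruct (Rle_dec s 0), (Rle_dec t 0); unfold Rabs;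
    repeat destruct Rcase_abs; nra. }
  assert (Hk2 : s + t <= kf K s + kf K t).
  { unfold kf; destruct (Rle_dec s 0), (Rle_dec t 0); nra. }
  assert (H1 : cosh (kf K s - kf K t) <= cosh (K * Rabs (s - t))).
  { rewrite <- cosh_abs. apply cosh_mono. apply Rabs_pos. auto. }
  assert (H2 := w_mono _ (fst p - fst q) _ _ Hk2 eq_refl).
  assert (H3 : cosh (Rabs (s - t)) - cosh (K * Rabs (s - t)) <= 0) by
    (assert (cosh (Rabs (s - t)) <= cosh (K * Rabs (s - t))) by
      (apply cosh_mono; [apply Rabs_pos| pose proof (Rabs_pos (s-t)); nra]); lra).
  assert (H4 : cosh (Rabs (s - t)) - cosh (K * Rabs (s - t)) <= 0) by lra.
  assert (H5 : cosh d - cosh (Rabs (s - t)) <= cosh (K * d) - cosh (K * Rabs (s - t))).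
  { apply lemP; pose proof (Rabs_pos (s - t)); nra. }
  rewrite cosh_abs in H5. lra.
Qed.

Lemma claimA K p r : 1 <= K -> 0 < snd p -> 0 < snd r -> 0 <= sc p -> sc r <= 0 ->
  hdist (G K p) r <= hdist p r + (K - 1) * sc p.
Proof.
  intros HK Hp Hr Hs Ht.
  set (s := sc p) in *. set (t := sc r) in *. set (d := hdist p r).
  assert (Hd : Rabs (s - t) <= d) by (apply busemann; auto).
  rewrite Rabs_right in Hd by lra.
  assert (Hcd : cosh d = ch p r) by (apply cosh_hdist; auto).
  rewrite ch_log2 in Hcd by auto. fold s t in Hcd.
  apply hdist_le; try apply G_pos; auto. nra.
  rewrite ch_log2 by (auto; apply G_pos). rewrite sc_G. fold s t. rewrite kf_nn by auto.
  simpl fst.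
  assert (Hk2 : s + t <= K * s + t) by nra.
  assert (H2 := w_mono _ (fst p - fst r) _ _ Hk2 eq_refl).
  assert (H5 : cosh (K * s - t) - cosh (s - t) <= cosh (d + (K - 1) * s) - cosh d).
  { apply lemP; nra. }
  lra.
Qed.

Lemma G_cont K p eps : 0 < K <= 1 -> 0 < snd p -> 0 < eps ->
  exists delta, 0 < delta /\ forall q, 0 < snd q -> hdist p q < delta -> hdist (G K p) (G K q) < eps.
Proof.
  intros HK Hp He.
  set (s := sc p).
  set (M0 := exp ((1 - K) * (2 * Rabs s + 1))).
  assert (HM0 : 1 <= M0) by (apply exp_ge1; pose proof (Rabs_pos s); nra).
  set (a := 1 + (cosh eps - 1) / M0).
  assert (Hce : 1 < cosh eps) by (apply cosh_gt1; auto).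
  assert (Ha : 1 < a).
  { unfold a. assert (0 < (cosh eps - 1) / M0) by (apply Rdiv_lt_0_compat; lra). lra. }
  assert (Haa : 0 < arcosh a) by (rewrite <- arcosh_1; apply arcosh_strict; lra).
  exists (Rmin 1 (arcosh a)). split. apply Rmin_glb_lt; lra.
  intros q Hq Hpq.
  set (t := sc q). set (d := hdist p q).
  assert (Hd0 : 0 <= d) by (apply hdist_nonneg; auto).
  assert (Hd1 : d < 1) by (pose proof (Rmin_l 1 (arcosh a)); unfold d; lra).
  assert (Hd2 : d < arcosh a) by (pose proof (Rmin_r 1 (arcosh a)); unfold d; lra).
  assert (Hd : Rabs (s - t) <= d) by (apply busemann; auto).
  assert (Hcd : cosh d = ch p q) by (apply cosh_hdist; auto).
  assert (Hcd2 : cosh d < a).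
  { rewrite <- (cosh_arcosh a) by lra. apply cosh_strict; auto. }
  rewrite ch_log2 in Hcd by auto. fold s t in Hcd.
  apply hdist_lt; try apply G_pos; try lra.
  rewrite ch_G by auto. fold s t.
  assert (Hk1 : Rabs (kf K s - kf K t) <= Rabs (s - t)).
  { unfold kf; destruct (Rle_dec s 0), (Rle_dec t 0); unfold Rabs;
    repeat destruct Rcase_abs; nra. }
  assert (H1 : cosh (kf K s - kf K t) <= cosh (s - t)).
  { rewrite <- cosh_abs. rewrite <- (cosh_abs (s - t)). apply cosh_mono. apply Rabs_pos. auto. }
  assert (Ht : Rabs t <= Rabs s + 1).
  { revert Hd Hd1; unfold Rabs; repeat destruct Rcase_abs; lra. }
  assert (Hk2 : - (kf K s + kf K t) <= - (s + t) + (1 - K) * (2 * Rabs s + 1)).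
  { assert (- (kf K s + kf K t) <= - (s + t) + (1 - K) * (Rabs s + Rabs t)).
    { unfold kf; destruct (Rle_dec s 0), (Rle_dec t 0); unfold Rabs;
      repeat destruct Rcase_abs; nra. }
    pose proof (Rabs_pos t); nra. }
  assert (H2 : exp (- (kf K s + kf K t)) <= exp (- (s + t)) * M0).
  { unfold M0; rewrite <- exp_plus; apply exp_le'; lra. }
  set (w := (fst p - fst q) ^ 2 * exp (- (s + t)) / 8).
  assert (Hw0 : 0 <= w).
  { unfold w. pose proof (pow2_ge_0 (fst p - fst q)); pose proof (exp_pos (- (s+t))).
    apply Rmult_le_pos; [|lra]. nra. }
  assert (H3 : (fst p - fst q) ^ 2 * exp (- (kf K s + kf K t)) / 8 <= M0 * w).
  { unfold w. pose proof (pow2_ge_0 (fst p - fst q)). nra. }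
  assert (H4 : 1 <= cosh (s - t)) by apply cosh_ge1.
  assert (H6 : M0 * (cosh d - 1) < cosh eps - 1).
  { assert (cosh d - 1 < (cosh eps - 1) / M0) by (unfold a in Hcd2; lra).
    apply Rmult_lt_compat_l with (r := M0) in H; [|lra].
    replace (M0 * ((cosh eps - 1) / M0)) with (cosh eps - 1) in H by (field; lra). lra. }
  assert (H7 : cosh (s - t) - 1 <= M0 * (cosh (s - t) - 1)) by nra.
  assert (H8 : M0 * (cosh d - 1) = M0 * (cosh (s - t) - 1) + M0 * w) by (rewrite Hcd; unfold w; ring).
  lra.
Qed.

Inductive cusp := Cinf | Cone | Cmone.

Definition phi (c : cusp) : pt -> pt :=
  match c with Cinf => fun p => p | Cone => iota1 | Cmone => iotam end.

Lemma phi_pos c p : 0 < snd p -> 0 < snd (phi c p).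
Proof. intros; destruct c; [exact H | apply iota1_pos; auto | apply iotam_pos; auto]. Qed.

Lemma phi_inv c p : 0 < snd p -> phi c (phi c p) = p.
Proof. intros; destruct c; [reflexivity | apply iota1_inv; auto | apply iotam_inv; auto]. Qed.

Lemma phi_iso c p q : 0 < snd p -> 0 < snd q -> hdist (phi c p) (phi c q) = hdist p q.
Proof. intros; rewrite !hdist_ch; destruct c; simpl; auto; rewrite ?iota1_iso, ?iotam_iso; auto. Qed.

Definition Gc (K : R) (c : cusp) (p : pt) : pt := phi c (G K (phi c p)).
Definition sv (c : cusp) (p : pt) : R := sc (phi c p).

Lemma Gc_pos K c p : 0 < snd (Gc K c p).
Proof. apply phi_pos, G_pos. Qed.

Lemma sv_Gc K c p : sv c (Gc K c p) = kf K (sv c p).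
Proof. unfold sv, Gc. rewrite phi_inv by apply G_pos. apply sc_G. Qed.

Lemma Gc_id K c p : 0 < snd p -> sv c p <= 0 -> Gc K c p = p.
Proof. intros. unfold Gc. rewrite G_id; auto using phi_pos, phi_inv. Qed.

Lemma Gc_inv K c p : 0 < K -> 0 < snd p -> Gc (/ K) c (Gc K c p) = p.
Proof. intros. unfold Gc. rewrite phi_inv by apply G_pos. rewrite G_inv; auto using phi_pos, phi_inv. Qed.

Lemma Gc_lip K c p q : 1 <= K -> 0 < snd p -> 0 < snd q -> hdist (Gc K c p) (Gc K c q) <= K * hdist p q.
Proof. intros. unfold Gc. rewrite phi_iso by apply G_pos. rewrite <- (phi_iso c p q) by auto.
  apply G_lip; auto using phi_pos. Qed.

Lemma claimA_c K c p r : 1 <= K -> 0 < snd p -> 0 < snd r -> 0 <= sv c p -> sv c r <= 0 ->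
  hdist (Gc K c p) r <= hdist p r + (K - 1) * sv c p.
Proof. intros. unfold Gc. rewrite <- (phi_inv c r) at 1 by auto.
  rewrite phi_iso by (auto using G_pos, phi_pos). rewrite <- (phi_iso c p r) by auto.
  apply claimA; auto using phi_pos. Qed.

Lemma Gc_cont K c p eps : 0 < K <= 1 -> 0 < snd p -> 0 < eps ->
  exists delta, 0 < delta /\ forall q, 0 < snd q -> hdist p q < delta -> hdist (Gc K c p) (Gc K c q) < eps.
Proof. intros. destruct (G_cont K (phi c p) eps) as [d [Hd Hq]]; auto using phi_pos.
  exists d; split; auto. intros q Hq0 Hpq. unfold Gc. rewrite phi_iso by apply G_pos.
  apply Hq. apply phi_pos; auto. rewrite phi_iso; auto. Qed.

Lemma busemann_c c p q : 0 < snd p -> 0 < snd q -> Rabs (sv c p - sv c q) <= hdist p q.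
Proof. intros. unfold sv. rewrite <- (phi_iso c p q) by auto. apply busemann; auto using phi_pos. Qed.

Lemma exp_sv1 q : 0 < snd q -> exp (sv Cone q) = 2 * snd q / ((fst q - 1) ^ 2 + snd q ^ 2).
Proof. intros. unfold sv; rewrite exp_sc by (apply phi_pos; auto). simpl. field.
  pose proof (sum_sq_pos (fst q - 1) (snd q) H). simpl in H0. lra. Qed.

Lemma exp_svm q : 0 < snd q -> exp (sv Cmone q) = 2 * snd q / ((fst q + 1) ^ 2 + snd q ^ 2).
Proof. intros. unfold sv; rewrite exp_sc by (apply phi_pos; auto). simpl. field.
  pose proof (sum_sq_pos (fst q + 1) (snd q) H). simpl in H0. lra. Qed.

Lemma cosh_expE L : cosh L = (exp L + / exp L) / 2.
Proof. apply cosh_e. Qed.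

Lemma depth_gen p q a (Ha : 0 < snd p) (Hq : 0 < snd q) :
  let D := (fst q - a) ^ 2 + snd q ^ 2 in
  (a = 1 \/ a = -1) ->
  0 <= sc p -> 0 <= ln (2 * snd q / D) -> sc p + ln (2 * snd q / D) <= hdist p q.
Proof.
  intros D Ha1 H1 H2.
  destruct p as [x1 y1], q as [x2 y2]. simpl in *.
  assert (HD : 0 < D) by (apply sum_sq_pos; auto).
  apply hdist_ge; auto. lra.
  rewrite cosh_e, exp_plus, exp_sc by auto. simpl. rewrite exp_ln by (apply Rdiv_lt_0_compat; lra).
  assert (Hy1 : 2 <= y1).
  { assert (1 <= exp (sc (x1, y1))) by (apply exp_ge1; auto). rewrite exp_sc in H by auto. simpl in H. lra. }
  assert (HqD : D <= 2 * y2).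
  { assert (1 <= exp (ln (2 * y2 / D))) by (apply exp_ge1; auto).
    rewrite exp_ln in H by (apply Rdiv_lt_0_compat; lra).
    apply Rmult_le_compat_r with (r := D) in H; [|lra].
    replace (2 * y2 / D * D) with (2 * y2) in H by (field; lra). lra. }
  assert (Hy2 : y2 <= 2).
  { assert (y2 ^ 2 <= 2 * y2) by (unfold D in HqD; pose proof (pow2_ge_0 (x2 - a)); lra).
    replace (y2 ^ 2) with (y2 * y2) in H by ring. nra. }
  assert (HD4 : D <= 4) by lra.
  unfold ch; simpl.
  assert (Hid : 1 + ((x1 - x2) ^ 2 + (y1 - y2) ^ 2) / (2 * y1 * y2) -
     (y1 / 2 * (2 * y2 / D) + / (y1 / 2 * (2 * y2 / D))) / 2 =
     ((x1 - x2) ^ 2 + (x2 - a) ^ 2 * ((y1 ^ 2 - D) / D)) / (2 * y1 * y2)).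
  { unfold D in *. field. split; [|lra]. intro Hz. rewrite <- Hz in HD. lra. }
  assert (0 <= ((x1 - x2) ^ 2 + (x2 - a) ^ 2 * ((y1 ^ 2 - D) / D)) / (2 * y1 * y2)).
  { apply Rmult_le_pos; [| left; apply Rinv_0_lt_compat; nra].
    pose proof (pow2_ge_0 (x1 - x2)); pose proof (pow2_ge_0 (x2 - a)).
    assert (0 <= (y1 ^ 2 - D) / D) by (apply Rmult_le_pos; [nra | left; apply Rinv_0_lt_compat; lra]).
    nra. }
  lra.
Qed.

Lemma depth_i1 p q : 0 < snd p -> 0 < snd q -> 0 <= sv Cinf p -> 0 <= sv Cone q ->
  sv Cinf p + sv Cone q <= hdist p q.
Proof.
  intros. assert (sv Cone q = ln (2 * snd q / ((fst q - 1) ^ 2 + snd q ^ 2))) by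
    (rewrite <- exp_sv1 by auto; rewrite ln_exp; auto).
  rewrite H3 in *. apply (depth_gen p q 1); auto.
Qed.

Lemma depth_im p q : 0 < snd p -> 0 < snd q -> 0 <= sv Cinf p -> 0 <= sv Cmone q ->
  sv Cinf p + sv Cmone q <= hdist p q.
Proof.
  intros. assert (sv Cmone q = ln (2 * snd q / ((fst q - -1) ^ 2 + snd q ^ 2))).
  { rewrite <- (ln_exp (sv Cmone q)). f_equal. rewrite exp_svm by auto.
    replace (fst q - -1) with (fst q + 1) by ring. reflexivity. }
  rewrite H3 in *. apply (depth_gen p q (-1)); auto.
Qed.

Lemma svm_iota1 q : 0 < snd q -> sv Cmone (iota1 q) = sv Cmone q.
Proof.
  intros. unfold sv, sc. f_equal. destruct q as [x y]; simpl in *.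
  assert (0 < (x - 1) ^ 2 + y ^ 2) by (apply sum_sq_pos; auto).
  assert (0 < (x + 1) ^ 2 + y ^ 2) by (apply sum_sq_pos; auto).
  assert (0 < y * y) by nra.
  field. repeat split; intro Hz; nra.
Qed.

Lemma depth_1m p q : 0 < snd p -> 0 < snd q -> 0 <= sv Cone p -> 0 <= sv Cmone q ->
  sv Cone p + sv Cmone q <= hdist p q.
Proof.
  intros. rewrite <- (svm_iota1 q) in * by auto. rewrite <- (phi_iso Cone p q) by auto.
  apply depth_im; auto using iota1_pos; apply iota1_pos; auto.
Qed.

Lemma depth c c' p q : c <> c' -> 0 < snd p -> 0 < snd q -> 0 <= sv c p -> 0 <= sv c' q ->
  sv c p + sv c' q <= hdist p q.
Proof.
  intros Hne Hp Hq H1 H2.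
  destruct c, c'; try congruence;
  first [ apply depth_i1; auto | apply depth_im; auto | apply depth_1m; auto
        | rewrite hdist_sym, Rplus_comm;
          first [ apply depth_i1; auto | apply depth_im; auto | apply depth_1m; auto ] ].
Qed.

Lemma disj c c' r : c <> c' -> 0 < snd r -> 0 <= sv c r -> sv c' r <= 0.
Proof.
  intros. destruct (Rle_dec (sv c' r) 0); auto.
  pose proof (depth c c' r r H H0 H0 H1 ltac:(lra)). rewrite hdist_refl in H2. lra.
Qed.

Lemma tri_iota1 p : ideal_triangle p -> ideal_triangle (iota1 p).
Proof.
  unfold ideal_triangle, iota1, iotam. destruct p as [x y]. cbn [fst snd]. intros [Hy [[Hx1 Hx2] Hn]].
  assert (HD : 0 < (x - 1) ^ 2 + y ^ 2) by (apply sum_sq_pos; auto).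
  set (D := (x - 1) ^ 2 + y ^ 2) in *.
  split. apply Rmult_lt_0_compat; [lra| apply Rinv_0_lt_compat; auto].
  assert (E1 : 4 * (x - 1) / D <= 0).
  { assert (0 <= 4 * (1 - x) / D) by (apply Rmult_le_pos; [lra| left; apply Rinv_0_lt_compat; auto]).
    replace (4 * (x - 1) / D) with (- (4 * (1 - x) / D)) by (field; lra). lra. }
  assert (E2 : -2 <= 4 * (x - 1) / D).
  { apply Rmult_le_reg_r with D; auto. replace (4 * (x - 1) / D * D) with (4 * (x - 1)) by (field; lra).
    unfold D. assert ((x - 1) ^ 2 = x ^ 2 - 2 * x + 1) by ring.
    assert ((x + 1) ^ 2 = x ^ 2 + 2 * x + 1) by ring. lra. }
  split; [split; lra|].
  assert (Hid : (1 + 4 * (x - 1) / D) ^ 2 + (4 * y / D) ^ 2 = 1 + 8 * (x + 1) / D).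
  { unfold D in *. field. lra. }
  rewrite Hid. assert (0 <= 8 * (x + 1) / D) by (apply Rmult_le_pos; [lra| left; apply Rinv_0_lt_compat; auto]).
  lra.
Qed.

Lemma tri_iotam p : ideal_triangle p -> ideal_triangle (iotam p).
Proof.
  unfold ideal_triangle, iota1, iotam. destruct p as [x y]. cbn [fst snd]. intros [Hy [[Hx1 Hx2] Hn]].
  assert (HD : 0 < (x + 1) ^ 2 + y ^ 2) by (apply sum_sq_pos; auto).
  set (D := (x + 1) ^ 2 + y ^ 2) in *.
  split. apply Rmult_lt_0_compat; [lra| apply Rinv_0_lt_compat; auto].
  assert (E1 : 0 <= 4 * (x + 1) / D).
  { apply Rmult_le_pos; [lra| left; apply Rinv_0_lt_compat; auto]. }
  assert (E2 : 4 * (x + 1) / D <= 2).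
  { apply Rmult_le_reg_r with D; auto. replace (4 * (x + 1) / D * D) with (4 * (x + 1)) by (field; lra).
    unfold D. assert ((x - 1) ^ 2 = x ^ 2 - 2 * x + 1) by ring.
    assert ((x + 1) ^ 2 = x ^ 2 + 2 * x + 1) by ring. lra. }
  split; [split; lra|].
  assert (Hid : (-1 + 4 * (x + 1) / D) ^ 2 + (4 * y / D) ^ 2 = 1 + 8 * (1 - x) / D).
  { unfold D in *. field. lra. }
  rewrite Hid. assert (0 <= 8 * (1 - x) / D) by (apply Rmult_le_pos; [lra| left; apply Rinv_0_lt_compat; auto]).
  lra.
Qed.

Lemma tri_phi c p : ideal_triangle p -> ideal_triangle (phi c p).
Proof. destruct c; simpl; auto using tri_iota1, tri_iotam. Qed.

Lemma tri_G K p : 0 < K -> ideal_triangle p -> ideal_triangle (G K p).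
Proof.
  intros HK Ht. destruct (Rle_dec (sc p) 0).
  rewrite G_id; auto. destruct Ht; auto.
  destruct p as [x y]. unfold ideal_triangle in *. simpl in *. destruct Ht as [Hy [Hx Hn]].
  split. pose proof (exp_pos (kf K (sc (x, y)))); lra. split; auto.
  assert (1 <= exp (kf K (sc (x, y)))) by (apply exp_ge1; unfold kf; destruct Rle_dec; nra).
  pose proof (pow2_ge_0 x). nra.
Qed.

Lemma tri_Gc K c p : 0 < K -> ideal_triangle p -> ideal_triangle (Gc K c p).
Proof. intros; unfold Gc; auto using tri_phi, tri_G. Qed.

Definition fK (K : R) (p : pt) : pt :=
  if Rlt_dec 0 (sv Cone p) then Gc K Cone p
  else if Rlt_dec 0 (sv Cmone p) then Gc K Cmone p else Gc K Cinf p.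

Definition compat (c : cusp) (p : pt) : Prop := forall c', c' <> c -> sv c' p <= 0.

Lemma f_compat K c p : 0 < snd p -> compat c p -> fK K p = Gc K c p.
Proof.
  intros Hp Hc. unfold fK.
  destruct c.
  - assert (sv Cone p <= 0) by (apply Hc; discriminate).
    assert (sv Cmone p <= 0) by (apply Hc; discriminate).
    destruct (Rlt_dec 0 (sv Cone p)); [lra|]. destruct (Rlt_dec 0 (sv Cmone p)); [lra|]. auto.
  - destruct (Rlt_dec 0 (sv Cone p)); auto.
    assert (sv Cmone p <= 0) by (apply Hc; discriminate).
    assert (sv Cinf p <= 0) by (apply Hc; discriminate).
    destruct (Rlt_dec 0 (sv Cmone p)); [lra|].
    rewrite !Gc_id by (auto; lra). auto.
  - assert (sv Cone p <= 0) by (apply Hc; discriminate).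
    assert (sv Cinf p <= 0) by (apply Hc; discriminate).
    destruct (Rlt_dec 0 (sv Cone p)); [lra|].
    destruct (Rlt_dec 0 (sv Cmone p)); auto.
    rewrite !Gc_id by (auto; lra). auto.
Qed.

Lemma class_p p : (exists u, 0 < sv u p) \/ (forall c, sv c p <= 0).
Proof.
  destruct (Rlt_dec 0 (sv Cinf p)). left; eauto.
  destruct (Rlt_dec 0 (sv Cone p)). left; eauto.
  destruct (Rlt_dec 0 (sv Cmone p)). left; eauto.
  right; intros []; lra.
Qed.

Lemma strict_compat u p : 0 < snd p -> 0 < sv u p -> compat u p.
Proof. intros Hp Hu c' Hne. apply (disj u c'); auto; lra. Qed.

Lemma all_compat c p : (forall c', sv c' p <= 0) -> compat c p.
Proof. intros H c' _; auto. Qed.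

Lemma cusp_eq_dec (u v : cusp) : {u = v} + {u <> v}.
Proof. decide equality. Qed.

Lemma pair_class p q : 0 < snd p -> 0 < snd q ->
  (exists c, compat c p /\ compat c q) \/
  (exists u v, u <> v /\ 0 < sv u p /\ 0 < sv v q).
Proof.
  intros Hp Hq.
  destruct (class_p p) as [[u Hu]|Hall]; destruct (class_p q) as [[v Hv]|Hall'].
  - destruct (cusp_eq_dec u v). subst. left; exists v; split; apply strict_compat; auto.
    right; exists u, v; auto.
  - left; exists u; split. apply strict_compat; auto. apply all_compat; auto.
  - left; exists v; split. apply all_compat; auto. apply strict_compat; auto.
  - left; exists Cinf; split; apply all_compat; auto.
Qed.

Lemma f_lip K p q : 1 <= K -> 0 < snd p -> 0 < snd q -> hdist (fK K p) (fK K q) <= K * hdist p q.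
Proof.
  intros HK Hp Hq.
  destruct (pair_class p q Hp Hq) as [[c [Hcp Hcq]] | [u [v [Huv [Hu Hv]]]]].
  - rewrite (f_compat K c p), (f_compat K c q) by auto. apply Gc_lip; auto.
  - rewrite (f_compat K u p) by (auto; apply strict_compat; auto).
    rewrite (f_compat K v q) by (auto; apply strict_compat; auto).
    assert (Hsv : 0 <= sv v (Gc K v q)) by (rewrite sv_Gc; unfold kf; destruct Rle_dec; nra).
    assert (H1 : sv u (Gc K v q) <= 0) by (apply (disj v u); auto using Gc_pos).
    assert (H2 : sv v p <= 0) by (apply (disj u v); auto; lra).
    pose proof (claimA_c K u p (Gc K v q) HK Hp (Gc_pos K v q) ltac:(lra) H1) as A1.
    pose proof (claimA_c K v q p HK Hq Hp ltac:(lra) H2) as A2.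
    rewrite hdist_sym in A2. rewrite (hdist_sym q p) in A2.
    pose proof (depth u v p q Huv Hp Hq ltac:(lra) ltac:(lra)) as D.
    nra.
Qed.

Lemma f_id K p : 0 < snd p -> (forall c, sv c p <= 0) -> fK K p = p.
Proof. intros. rewrite (f_compat K Cinf p) by (auto; apply all_compat; auto). apply Gc_id; auto. Qed.

Lemma f_inv K p : 0 < K -> 0 < snd p -> fK (/ K) (fK K p) = p.
Proof.
  intros HK Hp. destruct (class_p p) as [[u Hu]|Hall].
  - rewrite (f_compat K u p) by (auto; apply strict_compat; auto).
    assert (Hc : compat u (Gc K u p)).
    { apply strict_compat. apply Gc_pos. rewrite sv_Gc. apply kf_pos; auto. }
    rewrite (f_compat (/ K) u) by (auto; apply Gc_pos).
    apply Gc_inv; auto.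
  - rewrite (f_id K p) by auto. rewrite f_id; auto.
Qed.

Lemma f_tri K p : 0 < K -> ideal_triangle p -> ideal_triangle (fK K p).
Proof.
  intros. unfold fK. destruct Rlt_dec; [|destruct Rlt_dec]; apply tri_Gc; auto.
Qed.

Lemma tri_pos p : ideal_triangle p -> 0 < snd p.
Proof. intros [H _]; auto. Qed.

Lemma f_cont K p eps : 0 < K <= 1 -> 0 < snd p -> 0 < eps ->
  exists delta, 0 < delta /\ forall q, 0 < snd q -> hdist p q < delta -> hdist (fK K p) (fK K q) < eps.
Proof.
  intros HK Hp He.
  destruct (Gc_cont K Cinf p eps HK Hp He) as [d1 [Hd1 H1]].
  destruct (Gc_cont K Cone p eps HK Hp He) as [d2 [Hd2 H2]].
  destruct (Gc_cont K Cmone p eps HK Hp He) as [d3 [Hd3 H3]].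
  set (d0 := Rmin d1 (Rmin d2 d3)).
  assert (Hd0 : 0 < d0) by (unfold d0; repeat apply Rmin_glb_lt; auto).
  assert (Hall : forall c q, 0 < snd q -> hdist p q < d0 -> hdist (Gc K c p) (Gc K c q) < eps).
  { intros c q Hq Hpq. pose proof (Rmin_l d1 (Rmin d2 d3)). pose proof (Rmin_r d1 (Rmin d2 d3)).
    pose proof (Rmin_l d2 d3). pose proof (Rmin_r d2 d3).
    unfold d0 in Hpq. destruct c; [apply H1 | apply H2 | apply H3]; auto; lra. }
  destruct (class_p p) as [[u Hu]|Hallp].
  - exists (Rmin d0 (sv u p)). split. apply Rmin_glb_lt; auto.
    intros q Hq Hpq. pose proof (Rmin_l d0 (sv u p)). pose proof (Rmin_r d0 (sv u p)).
    pose proof (busemann_c u p q Hp Hq) as Hb.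
    assert (0 < sv u q) by (revert Hb; unfold Rabs; destruct (Rcase_abs (sv u p - sv u q)); intros; lra).
    rewrite (f_compat K u p), (f_compat K u q) by (auto; apply strict_compat; auto).
    apply Hall; auto; lra.
  - exists d0. split; auto. intros q Hq Hpq.
    destruct (class_p q) as [[v Hv]|Hallq].
    + rewrite (f_compat K v p) by (auto; apply all_compat; auto).
      rewrite (f_compat K v q) by (auto; apply strict_compat; auto).
      apply Hall; auto.
    + rewrite (f_compat K Cinf p), (f_compat K Cinf q) by (auto; apply all_compat; auto).
      apply Hall; auto.
Qed.

Definition Lp (s : R) : pt := (-1, 2 * exp s).
Definition Rp (s : R) : pt := (1, 2 * exp s).
Definition Bp (s : R) : pt := iota1 (Lp s).

Lemma Lp_pos s : 0 < snd (Lp s).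
Proof. simpl; pose proof (exp_pos s); lra. Qed.
Lemma Rp_pos s : 0 < snd (Rp s).
Proof. simpl; pose proof (exp_pos s); lra. Qed.
Lemma Bp_pos s : 0 < snd (Bp s).
Proof. apply iota1_pos, Lp_pos. Qed.

Lemma sc_2exp x s : sc (x, 2 * exp s) = s.
Proof. unfold sc; simpl. replace (2 * exp s / 2) with (exp s) by field. apply ln_exp. Qed.

Lemma G_L K s : G K (Lp s) = Lp (kf K s).
Proof. unfold G, Lp. rewrite sc_2exp. reflexivity. Qed.
Lemma G_R K s : G K (Rp s) = Rp (kf K s).
Proof. unfold G, Rp. rewrite sc_2exp. reflexivity. Qed.

Lemma iotam_L s : iotam (Lp s) = Lp (- s).
Proof. unfold iotam, Lp; cbn [fst snd]. rewrite exp_Ropp. pose proof (exp_pos s).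
  f_equal; field; lra. Qed.

Lemma iota1_R s : iota1 (Rp s) = Rp (- s).
Proof. unfold iota1, Rp; cbn [fst snd]. rewrite exp_Ropp. pose proof (exp_pos s).
  f_equal; field; lra. Qed.

Lemma iotam_B s : iotam (Bp s) = Rp (- s).
Proof. unfold Bp, iotam, iota1, Lp, Rp; cbn [fst snd]. rewrite exp_Ropp. pose proof (exp_pos s).
  set (E := exp s) in *. assert (0 < E * E) by nra.
  f_equal; field; repeat split; try lra; nra. Qed.

Lemma iotam_R s : iotam (Rp (- s)) = Bp s.
Proof. rewrite <- iotam_B. apply iotam_inv, Bp_pos. Qed.

Lemma small_sc p : 0 < snd p -> snd p <= 1 -> sc p <= 0.
Proof. intros. unfold sc. rewrite <- ln_1. apply ln_le'; lra. Qed.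

Lemma snd_bot_le1 s : snd (iota1 (Lp s)) <= 1 /\ snd (iotam (Rp s)) <= 1.
Proof.
  unfold iota1, iotam, Lp, Rp; cbn [fst snd]. pose proof (exp_pos s). set (E := exp s) in *.
  replace (-1 - 1) with (-2) by ring. replace (1 + 1) with 2 by ring.
  assert (0 < (-2) ^ 2 + (2 * E) ^ 2) by (apply sum_sq_pos; lra).
  assert (0 < 2 ^ 2 + (2 * E) ^ 2) by (apply sum_sq_pos; lra).
  split; apply Rmult_le_reg_r with ((2 ^ 2 + (2 * E) ^ 2)); auto;
  replace ((-2) ^ 2) with (2 ^ 2) by ring;
  replace (4 * (2 * E) / (2 ^ 2 + (2 * E) ^ 2) * (2 ^ 2 + (2 * E) ^ 2)) with (4 * (2 * E)) by (field; lra);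
  (replace ((2 * E) ^ 2) with (4 * (E * E)) by ring; replace (2 ^ 2) with 4 by ring;
   pose proof (pow2_ge_0 (E - 1)); replace ((E - 1) ^ 2) with (E * E - 2 * E + 1) in * by ring; lra).
Qed.

Lemma sv_L s : sv Cinf (Lp s) = s /\ sv Cmone (Lp s) = - s /\ sv Cone (Lp s) <= 0.
Proof.
  unfold sv; simpl phi. split. apply sc_2exp. split. rewrite iotam_L. apply sc_2exp.
  apply small_sc. apply iota1_pos, Lp_pos. apply (proj1 (snd_bot_le1 s)).
Qed.

Lemma sv_R s : sv Cinf (Rp s) = s /\ sv Cone (Rp s) = - s /\ sv Cmone (Rp s) <= 0.
Proof.
  unfold sv; simpl phi. split. apply sc_2exp. split. rewrite iota1_R. apply sc_2exp.
  apply small_sc. apply iotam_pos, Rp_pos. apply (proj2 (snd_bot_le1 s)).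
Qed.

Lemma sv_B s : sv Cone (Bp s) = s /\ sv Cmone (Bp s) = - s /\ sv Cinf (Bp s) <= 0.
Proof.
  unfold sv; simpl phi. split. unfold Bp. rewrite iota1_inv by apply Lp_pos. apply sc_2exp.
  split. rewrite iotam_B. apply sc_2exp.
  unfold Bp. apply small_sc. apply iota1_pos, Lp_pos. apply (proj1 (snd_bot_le1 s)).
Qed.

Lemma f_L K s : 0 < K -> fK K (Lp s) = Lp (K * s).
Proof.
  intros HK. destruct (sv_L s) as [H1 [H2 H3]].
  destruct (Rlt_dec 0 s).
  - rewrite (f_compat K Cinf) by (apply Lp_pos || (apply strict_compat; [apply Lp_pos| lra])).
    unfold Gc; simpl phi. rewrite G_L, kf_nn by lra. auto.
  - destruct (Rlt_dec s 0).
    + rewrite (f_compat K Cmone) by (apply Lp_pos || (apply strict_compat; [apply Lp_pos| lra])).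
      unfold Gc; simpl phi. rewrite iotam_L, G_L, kf_nn by lra. rewrite iotam_L. f_equal. ring.
    + assert (s = 0) by lra. subst. rewrite f_id. f_equal; f_equal; ring. apply Lp_pos.
      intros []; lra.
Qed.

Lemma f_R K s : 0 < K -> fK K (Rp s) = Rp (K * s).
Proof.
  intros HK. destruct (sv_R s) as [H1 [H2 H3]].
  destruct (Rlt_dec 0 s).
  - rewrite (f_compat K Cinf) by (apply Rp_pos || (apply strict_compat; [apply Rp_pos| lra])).
    unfold Gc; simpl phi. rewrite G_R, kf_nn by lra. auto.
  - destruct (Rlt_dec s 0).
    + rewrite (f_compat K Cone) by (apply Rp_pos || (apply strict_compat; [apply Rp_pos| lra])).
      unfold Gc; simpl phi. rewrite iota1_R, G_R, kf_nn by lra. rewrite iota1_R. f_equal. ring.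
    + assert (s = 0) by lra. subst. rewrite f_id. f_equal; f_equal; ring. apply Rp_pos.
      intros []; lra.
Qed.

Lemma f_B K s : 0 < K -> fK K (Bp s) = Bp (K * s).
Proof.
  intros HK. destruct (sv_B s) as [H1 [H2 H3]].
  destruct (Rlt_dec 0 s).
  - rewrite (f_compat K Cone) by (apply Bp_pos || (apply strict_compat; [apply Bp_pos| lra])).
    unfold Gc; simpl phi. unfold Bp at 1. rewrite iota1_inv by apply Lp_pos.
    rewrite G_L, kf_nn by lra. auto.
  - destruct (Rlt_dec s 0).
    + rewrite (f_compat K Cmone) by (apply Bp_pos || (apply strict_compat; [apply Bp_pos| lra])).
      unfold Gc; simpl phi. rewrite iotam_B, G_R, kf_nn by lra.
      replace (K * - s) with (- (K * s)) by ring. apply iotam_R.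
    + assert (s = 0) by lra. subst. rewrite f_id. f_equal; f_equal; ring. apply Bp_pos.
      intros []; lra.
Qed.

Lemma hdist_L a b : hdist (Lp a) (Lp b) = Rabs (a - b).
Proof.
  rewrite hdist_ch, ch_log2 by apply Lp_pos. unfold Lp at 1 2. rewrite !sc_2exp. simpl fst.
  assert (Z : forall e, (-1 - -1) ^ 2 * e / 8 = 0) by (intros; field). rewrite Z.
  rewrite Rplus_0_r, <- cosh_abs. apply arcosh_cosh, Rabs_pos.
Qed.

Lemma hdist_R a b : hdist (Rp a) (Rp b) = Rabs (a - b).
Proof.
  rewrite hdist_ch, ch_log2 by apply Rp_pos. unfold Rp at 1 2. rewrite !sc_2exp. simpl fst.
  assert (Z : forall e, (1 - 1) ^ 2 * e / 8 = 0) by (intros; field). rewrite Z.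
  rewrite Rplus_0_r, <- cosh_abs. apply arcosh_cosh, Rabs_pos.
Qed.

Lemma hdist_B a b : hdist (Bp a) (Bp b) = Rabs (a - b).
Proof. unfold Bp. rewrite <- hdist_L. apply (phi_iso Cone (Lp a) (Lp b)); apply Lp_pos. Qed.

Lemma side_gen (S : pt -> Prop) (P : R -> pt) K f :
  0 < K ->
  (forall p, S p -> exists s, p = P s) -> (forall s, S (P s)) ->
  (forall s, f (P s) = P (K * s)) -> (forall a b, hdist (P a) (P b) = Rabs (a - b)) ->
  maps_side_stretching f S K.
Proof.
  intros HK Hpar HS Hf Hd. split; [|split].
  - intros p Hp. destruct (Hpar p Hp) as [s ->]. rewrite Hf. auto.
  - intros q Hq. destruct (Hpar q Hq) as [s ->]. exists (P (s / K)). split; auto.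
    rewrite Hf. f_equal. field; lra.
  - intros p q Hp Hq. destruct (Hpar p Hp) as [a ->]. destruct (Hpar q Hq) as [b ->].
    rewrite !Hf, !Hd. replace (K * a - K * b) with (K * (a - b)) by ring.
    rewrite Rabs_mult, Rabs_right by lra. auto.
Qed.

Lemma left_par p : side_left p -> exists s, p = Lp s.
Proof. destruct p as [x y]. intros [Hy Hx]. simpl in *. exists (sc (x, y)). unfold Lp.
  rewrite exp_sc by auto. simpl. f_equal; [auto | field]. Qed.

Lemma right_par p : side_right p -> exists s, p = Rp s.
Proof. destruct p as [x y]. intros [Hy Hx]. simpl in *. exists (sc (x, y)). unfold Rp.
  rewrite exp_sc by auto. simpl. f_equal; [auto | field]. Qed.

Lemma bottom_left p : side_bottom p -> side_left (iota1 p).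
Proof.
  destruct p as [x y]. intros [Hy Hx]. simpl in *. split. apply iota1_pos; auto.
  unfold iota1; cbn [fst snd].
  assert (x < 1) by (assert (0 < y ^ 2) by (apply pow_lt; auto); assert (x ^ 2 < 1) by lra;
     destruct (Rlt_dec x 1); auto; assert (1 <= x ^ 2) by nra; lra).
  assert (Hd : (x - 1) ^ 2 + y ^ 2 = 2 - 2 * x) by (replace (y ^ 2) with (1 - x ^ 2) by lra; ring).
  rewrite Hd. field. lra.
Qed.

Lemma bottom_par p : side_bottom p -> exists s, p = Bp s.
Proof.
  intros Hp. destruct (left_par (iota1 p) (bottom_left p Hp)) as [s Hs]. exists s.
  unfold Bp. rewrite <- Hs. symmetry. apply iota1_inv. destruct Hp; auto.
Qed.

Lemma L_side s : side_left (Lp s).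
Proof. split. apply Lp_pos. reflexivity. Qed.
Lemma R_side s : side_right (Rp s).
Proof. split. apply Rp_pos. reflexivity. Qed.
Lemma B_side s : side_bottom (Bp s).
Proof.
  split. apply Bp_pos. unfold Bp, iota1, Lp; cbn [fst snd]. pose proof (exp_pos s). set (E := exp s) in *.
  assert (0 < (-1 - 1) ^ 2 + (2 * E) ^ 2) by (apply sum_sq_pos; lra).
  field. lra.
Qed.

Theorem mainTheorem3 (K : R) (HK : 1 < K) :
  exists f : pt -> pt,
    (forall p, ideal_triangle p -> ideal_triangle (f p)) /\
    (forall p q, ideal_triangle p -> ideal_triangle q ->
       hdist (f p) (f q) <= K * hdist p q) /\
    hcontinuous_on ideal_triangle f /\
    (exists g : pt -> pt,
       (forall p, ideal_triangle p -> ideal_triangle (g p)) /\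
       (forall p, ideal_triangle p -> g (f p) = p) /\
       (forall p, ideal_triangle p -> f (g p) = p) /\
       hcontinuous_on ideal_triangle g) /\
    maps_side_stretching f side_left K /\
    maps_side_stretching f side_right K /\
    maps_side_stretching f side_bottom K.
Proof.
  assert (HK0 : 0 < K) by lra.
  assert (HKi : 0 < / K <= 1).
  { split. apply Rinv_0_lt_compat; lra. rewrite <- Rinv_1. apply Rinv_le_contravar; lra. }
  exists (fK K).
  split. intros; apply f_tri; auto.
  split. intros; apply f_lip; auto using tri_pos; lra.
  split.
  { intros p Hp eps He. exists (eps / K). split. apply Rdiv_lt_0_compat; lra.
    intros q Hq Hd. pose proof (f_lip K p q ltac:(lra) (tri_pos p Hp) (tri_pos q Hq)).
    assert (K * hdist p q < K * (eps / K)) by (apply Rmult_lt_compat_l; lra).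
    replace (K * (eps / K)) with eps in H0 by (field; lra). lra. }
  split.
  { exists (fK (/ K)). split. intros; apply f_tri; [apply HKi | auto].
    split. intros; apply f_inv; auto using tri_pos.
    split. intros p Hp. rewrite <- (Rinv_inv K) at 1. apply f_inv. apply HKi. apply tri_pos; auto.
    intros p Hp eps He. destruct (f_cont (/ K) p eps HKi (tri_pos p Hp) He) as [d [Hd Hq]].
    exists d. split; auto. intros q Hq' Hpq. apply Hq; auto using tri_pos. }
  split. apply (side_gen side_left Lp); auto using left_par, L_side, f_L, hdist_L.
  split. apply (side_gen side_right Rp); auto using right_par, R_side, f_R, hdist_R.
  apply (side_gen side_bottom Bp); auto using bottom_par, B_side, f_B, hdist_B.
Qed.
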